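(* Assume the Lipschitz gradient assumption, $r_1>L_x$, and $r_2>(\frac{L_y}{r_1-L_x}+2)L_y$. Then for all $x,x'\in\mathcal X$, $y,y'\in\mathcal Y$, $z,z'\in\mathbb R^n$, $v,v'\in\mathbb R^d$: (i) $\|x(y',z,v)-x(y,z,v)\|\le\sigma_1\|y'-y\|$; (ii) $\|x(y,z',v)-x(y,z,v)\|\le\sigma_2\|z-z'\|$; (iii) $\|x(z',v)-x(z,v)\|\le\sigma_2\|z-z'\|$; (iv) $\|y(z,v)-y(z',v)\|\le\sigma_3\|z-z'\|$; (v) $\|y(x,z,v)-y(x',z,v)\|\le\sigma_4\|x-x'\|$; (vi) $\|y(x,z,v)-y(x,z,v')\|\le\sigma_5\|v-v'\|$; (vii) $\|y(z,v)-y(z,v')\|\le\sigma_5\|v-v'\|$, where $\sigma_1=\frac{L_y+r_1-L_x}{r_1-L_x}$, $\sigma_2=\frac{r_1}{r_1-L_x}$, $\sigma_3=\frac{r_1\sigma_1}{r_2-L_y}+\frac{\sigma_2}{\sigma_1}$, $\sigma_4=\frac{L_x+r_2-L_y}{r_2-L_y}$, $\sigma_5=\frac{r_2}{r_2-L_y}$.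
   Context: Let $\mathcal X\subset\mathbb R^n$, $\mathcal Y\subset\mathbb R^d$ be nonempty convex compact sets and $f:\mathbb R^n\times\mathbb R^d\to\mathbb R$ continuously differentiable. Lipschitz gradient assumption: there are $L_x,L_y>0$ such that for all $x,x'\in\mathcal X$, $y,y'\in\mathcal Y$, $\|\nabla_x f(x,y)-\nabla_x f(x',y')\|\le L_x(\|x-x'\|+\|y-y'\|)$ and $\|\nabla_y f(x,y)-\nabla_y f(x',y')\|\le L_y(\|x-x'\|+\|y-y'\|)$. $F(x,y,z,v)=f(x,y)+\frac{r_1}{2}\|x-z\|^2-\frac{r_2}{2}\|y-v\|^2$. For $z\in\mathbb R^n$, $v\in\mathbb R^d$: $d(y,z,v)=\min_{x\in\mathcal X}F(x,y,z,v)$ with unique minimizer $x(y,z,v)$; $h(x,z,v)=\max_{y\in\mathcal Y}F(x,y,z,v)$ with unique maximizer $y(x,z,v)$; $x(z,v)=\arg\min_{x\in\mathcal X}h(x,z,v)$; $y(z,v)=\arg\max_{y\in\mathcal Y}d(y,z,v)$. *)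

(* Defs.v *)
From HB Require Import structures.
From mathcomp Require Import all_boot all_order all_algebra.
From mathcomp Require Import all_classical all_reals all_analysis.
Set Implicit Arguments. Unset Strict Implicit. Unset Printing Implicit Defensive.
Import Order.TTheory GRing.Theory Num.Theory.
Import numFieldNormedType.Exports.
Local Open Scope classical_set_scope.
Local Open Scope ring_scope.

Definition edot (R : realType) (n : nat) (u v : 'rV[R]_n) : R :=
  \sum_(i < n) u ord0 i * v ord0 i.
Definition enorm (R : realType) (n : nat) (u : 'rV[R]_n) : R :=
  Num.sqrt (edot u u).

Definition gradx (R : realType) (n d : nat)
    (f : 'rV[R]_n * 'rV[R]_d -> R) (p : 'rV[R]_n * 'rV[R]_d) : 'rV[R]_n :=
  \row_(i < n) ('d f p (delta_mx ord0 i, 0)).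
Definition grady (R : realType) (n d : nat)
    (f : 'rV[R]_n * 'rV[R]_d -> R) (p : 'rV[R]_n * 'rV[R]_d) : 'rV[R]_d :=
  \row_(j < d) ('d f p (0, delta_mx ord0 j)).

Definition C1 (R : realType) (n d : nat) (f : 'rV[R]_n * 'rV[R]_d -> R) :=
  (forall p, differentiable f p) /\
  continuous (gradx f) /\ continuous (grady f).

Definition lipschitz_grad (R : realType) (n d : nat)
    (X : set 'rV[R]_n) (Y : set 'rV[R]_d) (f : 'rV[R]_n * 'rV[R]_d -> R)
    (Lx Ly : R) :=
  0 < Lx /\ 0 < Ly /\
  forall x x' y y', X x -> X x' -> Y y -> Y y' ->
    enorm (gradx f (x, y) - gradx f (x', y')) <= Lx * (enorm (x - x') + enorm (y - y')) /\
    enorm (grady f (x, y) - grady f (x', y')) <= Ly * (enorm (x - x') + enorm (y - y')).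

Definition Fobj (R : realType) (n d : nat) (f : 'rV[R]_n * 'rV[R]_d -> R)
    (r1 r2 : R) (x : 'rV[R]_n) (y : 'rV[R]_d) (z : 'rV[R]_n) (v : 'rV[R]_d) : R :=
  f (x, y) + r1 / 2 * enorm (x - z) ^+ 2 - r2 / 2 * enorm (y - v) ^+ 2.

Definition dfun (R : realType) (n d : nat) (X : set 'rV[R]_n)
    (f : 'rV[R]_n * 'rV[R]_d -> R) (r1 r2 : R) y z v : R :=
  inf [set Fobj f r1 r2 x y z v | x in X].
Definition hfun (R : realType) (n d : nat) (Y : set 'rV[R]_d)
    (f : 'rV[R]_n * 'rV[R]_d -> R) (r1 r2 : R) x z v : R :=
  sup [set Fobj f r1 r2 x y z v | y in Y].

Definition is_argmin (T : Type) (R : realType) (A : set T) (g : T -> R) (a : T) :=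
  A a /\ forall b, A b -> g a <= g b.
Definition is_argmax (T : Type) (R : realType) (A : set T) (g : T -> R) (a : T) :=
  A a /\ forall b, A b -> g b <= g a.

(* Main.v *)
Require Import Defs.
From HB Require Import structures.
From mathcomp Require Import all_boot all_order all_algebra.
From mathcomp Require Import all_classical all_reals all_analysis.
From mathcomp Require Import ring lra.
Import Order.TTheory GRing.Theory Num.Theory.
Import numFieldNormedType.Exports.
Local Open Scope classical_set_scope.
Local Open Scope ring_scope.
Set Implicit Arguments. Unset Strict Implicit. Unset Printing Implicit Defensive.

Lemma conv_mem (R : realType) m (S : set 'rV[R]_m) (a b : 'rV[R]_m) (t : R) :
  convex_set (S : set (convex_lmodType 'rV[R]_m)) -> S a -> S b -> 0 <= t -> t <= 1 ->
  S (a + t *: (b - a)).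
Proof.
move=> cS Sa Sb t0 t1.
have := cS b a (Itv01 t0 t1) (mem_set Sb) (mem_set Sa).
rewrite inE /=.
suff -> : a + t *: (b - a) = conv (Itv01 t0 t1) (b : convex_lmodType _) (a : convex_lmodType _) by []. rewrite /conv /=. apply/rowP => i; rewrite !mxE /unstable.onem; ring. Qed.


Lemma edot_ge0 {R : realType} {m : nat} (u : 'rV[R]_m) : 0 <= edot u u.
Proof. by apply: sumr_ge0 => i _; rewrite -expr2 sqr_ge0. Qed.

Lemma enorm_ge0 {R : realType} {m : nat} (u : 'rV[R]_m) : 0 <= enorm u.
Proof. exact: sqrtr_ge0. Qed.

Lemma enorm_sq {R : realType} {m : nat} (u : 'rV[R]_m) : enorm u ^+ 2 = edot u u.
Proof. by rewrite /enorm sqr_sqrtr // edot_ge0. Qed.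

Lemma edotC {R : realType} {m : nat} (u : 'rV[R]_m) (w : 'rV[R]_m) : edot u w = edot w u.
Proof. by apply: eq_bigr => i _; rewrite mulrC. Qed.

Lemma edotDl {R : realType} {m : nat} (u : 'rV[R]_m) (v : 'rV[R]_m) (w : 'rV[R]_m) : edot (u + v) w = edot u w + edot v w.
Proof. by rewrite /edot -big_split; apply: eq_bigr => i _; rewrite !mxE mulrDl. Qed.
Lemma edotZl {R : realType} {m : nat} (k : R) (u w : 'rV[R]_m) : edot (k *: u) w = k * edot u w.
Proof. by rewrite /edot mulr_sumr; apply: eq_bigr => i _; rewrite !mxE mulrA. Qed.
Lemma edotNl {R : realType} {m : nat} (u : 'rV[R]_m) (w : 'rV[R]_m) : edot (- u) w = - edot u w.
Proof. by rewrite -scaleN1r edotZl mulN1r. Qed.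
Lemma edotBl {R : realType} {m : nat} (u : 'rV[R]_m) (v : 'rV[R]_m) (w : 'rV[R]_m) : edot (u - v) w = edot u w - edot v w.
Proof. by rewrite edotDl edotNl. Qed.
Lemma edotDr {R : realType} {m : nat} (u : 'rV[R]_m) (v : 'rV[R]_m) (w : 'rV[R]_m) : edot w (u + v) = edot w u + edot w v.
Proof. by rewrite edotC edotDl !(edotC w). Qed.
Lemma edotZr {R : realType} {m : nat} (k : R) (u w : 'rV[R]_m) : edot w (k *: u) = k * edot w u.
Proof. by rewrite edotC edotZl (edotC w). Qed.
Lemma edotBr {R : realType} {m : nat} (u : 'rV[R]_m) (v : 'rV[R]_m) (w : 'rV[R]_m) : edot w (u - v) = edot w u - edot w v.
Proof. by rewrite edotC edotBl !(edotC w). Qed.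

Lemma edot_conv {R : realType} {m : nat} (a : 'rV[R]_m) (b : 'rV[R]_m) (z : 'rV[R]_m) (t : R) :
  edot (a + t *: (b - a) - z) (a + t *: (b - a) - z) =
  (1 - t) * edot (a - z) (a - z) + t * edot (b - z) (b - z)
  - t * (1 - t) * edot (b - a) (b - a).
Proof.
rewrite /edot !mulr_sumr -big_split /= -sumrB; apply: eq_bigr => i _.
rewrite !mxE; ring.
Qed.

Lemma edot_diff4 {R : realType} {m : nat} (a1 : 'rV[R]_m) (a2 : 'rV[R]_m) (z : 'rV[R]_m) (z' : 'rV[R]_m) :
  (edot (a2 - z) (a2 - z) - edot (a2 - z') (a2 - z')) -
  (edot (a1 - z) (a1 - z) - edot (a1 - z') (a1 - z')) =
  2 * edot (a2 - a1) (z' - z).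
Proof.
rewrite /edot !mulr_sumr -!sumrB; apply: eq_bigr => i _.
rewrite !mxE; ring.
Qed.

Lemma edot_CS {R : realType} {m : nat} (u : 'rV[R]_m) (w : 'rV[R]_m) : edot u w <= enorm u * enorm w.
Proof.
set A := edot u u; set B := edot w w; set C := edot u w.
have A0 : 0 <= A := edot_ge0 u.
have B0 : 0 <= B := edot_ge0 w.
have key : 0 <= B * (A * B - C ^+ 2).
  have := edot_ge0 (B *: u - C *: w).
  rewrite !(edotBl, edotBr, edotZl, edotZr) -/A -/B -/C (edotC w u) -/C.
  by congr (0 <= _); ring.
have [Bz|Bp] := eqVneq B 0.
  have w0 : forall i, w 0 i = 0.
    move=> i; have := Bz; rewrite /B /edot => /eqP; rewrite psumr_eq0; last first.
      by move=> j _; rewrite -expr2 sqr_ge0.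
    by move=> /allP /(_ i (mem_index_enum _)) /=; rewrite mulf_eq0 orbb => /eqP.
  have -> : C = 0 by rewrite /C /edot big1 // => i _; rewrite w0 mulr0.
  by rewrite mulr_ge0 // enorm_ge0.
have Bpos : 0 < B by rewrite lt_def Bp B0.
have CAB : C ^+ 2 <= A * B.
  by rewrite -subr_ge0; move: key; rewrite pmulr_rge0.
rewrite /enorm -sqrtrM // (le_trans (ler_norm C)) // -sqrtr_sqr.
by rewrite ler_sqrt // mulr_ge0.
Qed.

Lemma enormB {R : realType} {m : nat} (u : 'rV[R]_m) (w : 'rV[R]_m) : enorm (u - w) = enorm (w - u).
Proof. by rewrite -opprB /enorm /edot; congr Num.sqrt; apply: eq_bigr => i _; rewrite !mxE mulrNN. Qed.

Lemma line_derive (R : realType) (V : normedModType R) (f : V -> R) (p w : V) (t : R) :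
  differentiable f (p + t *: w) ->
  is_derive t 1 (fun s => f (p + s *: w)) ('d f (p + t *: w) w).
Proof.
move=> df.
pose g := (fun s : R => p + s *: w).
have dg : is_diff t g (fun h => 0 + h *: w).
  have := @is_diffD R R V (cst p) ( *:%R ^~ w) 0 ( *:%R ^~ w) t _ _.
  move=> H; exact: (H (is_diff_cst _ _) (is_diff_scalel _ _)).
have dgt : differentiable g t by exact: ex_diff.
have dk : differentiable (f \o g) t by apply: differentiable_comp.
have -> : (fun s => f (p + s *: w)) = f \o g by [].
split; first exact: diff_derivable.
rewrite deriveE // diff_comp // (@diff_val _ _ _ _ _ _ _ dg) /=.
by rewrite add0r scale1r.
Qed.

Lemma dgradx (R : realType) (n d : nat) (f : 'rV[R]_n * 'rV[R]_d -> R) q (wx : 'rV[R]_n) :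
  'd f q (wx, 0) = edot (gradx f q) wx.
Proof.
have -> : (wx, 0 : 'rV[R]_d) = \sum_(i < n) wx 0 i *: (delta_mx 0 i, 0 : 'rV[R]_d).
  rewrite {1}(row_sum_delta wx).
  elim/big_rec2: _ => [//|i a b _ <-].
  by apply: injective_projections => /=; rewrite ?scaler0 ?addr0.
rewrite linear_sum /edot; apply: eq_bigr => i _.
by rewrite linearZ /= !mxE mulrC.
Qed.
Lemma dgrady (R : realType) (n d : nat) (f : 'rV[R]_n * 'rV[R]_d -> R) q (wy : 'rV[R]_d) :
  'd f q (0, wy) = edot (grady f q) wy.
Proof.
have -> : (0 : 'rV[R]_n, wy) = \sum_(i < d) wy 0 i *: (0 : 'rV[R]_n, delta_mx 0 i).
  rewrite {1}(row_sum_delta wy).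
  elim/big_rec2: _ => [//|i a b _ <-].
  by apply: injective_projections => /=; rewrite ?scaler0 ?addr0.
rewrite linear_sum /edot; apply: eq_bigr => i _.
by rewrite linearZ /= !mxE mulrC.
Qed.
Lemma deriv_cont (R : realType) (k dk : R -> R) :
  (forall s : R, is_derive s (1 : R) k (dk s)) -> forall a b : R, {within `[a, b], continuous k}.
Proof.
move=> H a b; apply: continuous_subspaceT => x.
apply: differentiable_continuous; apply/derivable1_diffP.
by have [] := H x.
Qed.

Lemma mvt01 (R : realType) (k dk : R -> R) (K : R) :
  (forall s : R, is_derive s (1 : R) k (dk s)) ->
  (forall s, 0 <= s -> s <= 1 -> dk s <= K) -> k 1 - k 0 <= K.
Proof.
move=> H HK.
have [c c01 ->] := @MVT_segment R k dk 0 1 (@ler01 R) (fun x _ => H x) (deriv_cont (a:=0) (b:=1) H).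
rewrite subr0 mulr1; apply: HK; by rewrite (itvP c01).
Qed.

Lemma semiconv (R : realType) (k dk : R -> R) (c : R) :
  (forall s : R, is_derive s (1 : R) k (dk s)) ->
  (forall s t, 0 <= s -> s <= t -> t <= 1 -> dk s - dk t <= 2 * c * (t - s)) ->
  forall t, 0 <= t -> t <= 1 -> k t <= (1 - t) * k 0 + t * k 1 + c * t * (1 - t).
Proof.
move=> H Hm t t0 t1.
have [->|tn0] := eqVneq t 0; first by rewrite subr0; lra.
have [->|tn1] := eqVneq t 1; first by lra.
have tp : 0 < t by rewrite lt_def tn0 t0.
have tl : t < 1 by rewrite lt_def eq_sym tn1 t1.
pose m s := k s + c * (s * s).
pose dm s := dk s + c * (s * 1 + s * 1).
have Hd : forall s : R, is_derive s (1:R) m (dm s).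
  move=> s.
  have hM : is_derive s (1:R) ((@id R) * (@id R)) (s *: 1 + s *: 1).
    exact: is_deriveM.
  have h := is_deriveD (H s) (is_deriveZ c hM).
  apply: (is_derive_eq h); rewrite /dm /=. have E : forall x y : R, x *: y = x * y by []. rewrite !E //.
have [c1 c1i E1] := @MVT R m dm 0 t tp (fun x _ => Hd x) (deriv_cont (a:=0) (b:=t) Hd).
have [c2 c2i E2] := @MVT R m dm t 1 tl (fun x _ => Hd x) (deriv_cont (a:=t) (b:=1) Hd).
have c10 : 0 <= c1 by rewrite (itvP c1i).
have c1t : c1 <= t by rewrite (itvP c1i).
have c2t : t <= c2 by rewrite (itvP c2i).
have c21 : c2 <= 1 by rewrite (itvP c2i).
have hm := Hm c1 c2 c10 (le_trans c1t c2t) c21.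
have dmle : dm c1 <= dm c2 by rewrite /dm; lra.
have : t * (1 - t) * dm c1 <= t * (1 - t) * dm c2.
  by rewrite ler_wpM2l // mulr_ge0 // ?subr_ge0 ?ltW.
move: E1 E2; rewrite /m => E1 E2.
nra.
Qed.

Lemma enormZ {R : realType} {m : nat} (k : R) (u : 'rV[R]_m) : enorm (k *: u) = `|k| * enorm u.
Proof.
rewrite /enorm edotZl edotZr mulrA -expr2 sqrtrM ?sqr_ge0 //.
by rewrite sqrtr_sqr.
Qed.

Lemma enorm0 {R : realType} {m : nat} : enorm (0 : 'rV[R]_m) = 0.
Proof. by rewrite -(scale0r (0 : 'rV[R]_m)) enormZ normr0 mul0r. Qed.

Lemma edot_CSl {R : realType} {m : nat} (u w : 'rV[R]_m) : - (enorm u * enorm w) <= edot u w.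
Proof.
rewrite lerNl -edotNl; apply: (le_trans (edot_CS _ _)).
by rewrite -scaleN1r enormZ normrN normr1 mul1r.
Qed.

Lemma pairE1 {R : realType} {n d : nat} (a u : 'rV[R]_n) (y : 'rV[R]_d) (s : R) :
  (a, y) + s *: (u, 0) = (a + s *: u, y).
Proof. by apply: injective_projections => /=; rewrite ?scaler0 ?addr0. Qed.

Lemma pairE2 {R : realType} {n d : nat} (x : 'rV[R]_n) (a u : 'rV[R]_d) (s : R) :
  (x, a) + s *: (0, u) = (x, a + s *: u).
Proof. by apply: injective_projections => /=; rewrite ?scaler0 ?addr0. Qed.

Lemma line_x {R : realType} {n d : nat} (f : 'rV[R]_n * 'rV[R]_d -> R) (a u : 'rV[R]_n) (y : 'rV[R]_d) :
  C1 f -> forall s : R,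
  is_derive s (1 : R) (fun s => f (a + s *: u, y)) (edot (gradx f (a + s *: u, y)) u).
Proof.
move=> [df _] s.
have := @line_derive R _ f (a, y) (u, 0) s (df _).
rewrite pairE1 dgradx.
have -> : (fun s0 => f ((a, y) + s0 *: (u, 0))) = (fun s => f (a + s *: u, y)).
  by apply: funext => s0; rewrite pairE1.
by [].
Qed.

Lemma line_y {R : realType} {n d : nat} (f : 'rV[R]_n * 'rV[R]_d -> R) (x : 'rV[R]_n) (a u : 'rV[R]_d) :
  C1 f -> forall s : R,
  is_derive s (1 : R) (fun s => f (x, a + s *: u)) (edot (grady f (x, a + s *: u)) u).
Proof.
move=> [df _] s.
have := @line_derive R _ f (x, a) (0, u) s (df _).
rewrite pairE2 dgrady.
have -> : (fun s0 => f ((x, a) + s0 *: (0, u))) = (fun s => f (x, a + s *: u)).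
  by apply: funext => s0; rewrite pairE2.
by [].
Qed.

Lemma diffZ {R : realType} {m : nat} (a u : 'rV[R]_m) (s t : R) :
  (a + s *: u) - (a + t *: u) = (s - t) *: u.
Proof. by apply/rowP => i; rewrite !mxE; ring. Qed.

Lemma WCx {R : realType} {n d : nat} (X : set 'rV[R]_n) (Y : set 'rV[R]_d)
  (f : 'rV[R]_n * 'rV[R]_d -> R) (Lx Ly : R) (a b : 'rV[R]_n) (y : 'rV[R]_d) (t : R) :
  C1 f -> lipschitz_grad X Y f Lx Ly -> convex_set (X : set (convex_lmodType 'rV[R]_n)) ->
  Y y -> X a -> X b -> 0 <= t -> t <= 1 ->
  f (a + t *: (b - a), y) <= (1 - t) * f (a, y) + t * f (b, y)
     + Lx / 2 * edot (b - a) (b - a) * t * (1 - t).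
Proof.
move=> Cf [Lx0 [Ly0 HL]] cX Yy Xa Xb t0 t1.
have := semiconv (k := fun s => f (a + s *: (b - a), y))
  (dk := fun s => edot (gradx f (a + s *: (b - a), y)) (b - a))
  (c := Lx / 2 * edot (b - a) (b - a)) (line_x _ _ _ Cf) _ t0 t1.
rewrite scale0r addr0 scale1r [a + (b - a)]addrC subrK; apply.
move=> s u s0 su u1 /=.
rewrite -edotBl.
apply: (le_trans (edot_CS _ _)).
have Xs : X (a + s *: (b - a)) by apply: conv_mem => //; apply: (le_trans su).
have Xu : X (a + u *: (b - a)) by apply: conv_mem => //; apply: (le_trans s0).
have [H1 _] := HL _ _ _ _ Xs Xu Yy Yy.
have e0 := enorm_ge0 (b - a).
apply: (le_trans (ler_wpM2r e0 H1)).
rewrite subrr enorm0 addr0 diffZ enormZ ler0_norm ?subr_le0 //.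
by rewrite -enorm_sq le_eqVlt; apply/orP; left; apply/eqP; field.
Qed.

Lemma WCy {R : realType} {n d : nat} (X : set 'rV[R]_n) (Y : set 'rV[R]_d)
  (f : 'rV[R]_n * 'rV[R]_d -> R) (Lx Ly : R) (x : 'rV[R]_n) (a b : 'rV[R]_d) (t : R) :
  C1 f -> lipschitz_grad X Y f Lx Ly -> convex_set (Y : set (convex_lmodType 'rV[R]_d)) ->
  X x -> Y a -> Y b -> 0 <= t -> t <= 1 ->
  (1 - t) * f (x, a) + t * f (x, b) - Ly / 2 * edot (b - a) (b - a) * t * (1 - t)
  <= f (x, a + t *: (b - a)).
Proof.
move=> Cf [Lx0 [Ly0 HL]] cY Xx Ya Yb t0 t1.
have := semiconv (k := fun s => - f (x, a + s *: (b - a)))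
  (dk := fun s => - edot (grady f (x, a + s *: (b - a))) (b - a))
  (c := Ly / 2 * edot (b - a) (b - a)) (fun s => is_deriveN (line_y _ _ _ Cf s)) _ t0 t1.
rewrite scale0r addr0 scale1r [a + (b - a)]addrC subrK.
move=> H; have {}H := H _. 
suff : - f (x, a + t *: (b - a)) <= (1 - t) * - f (x, a) + t * - f (x, b) +
    Ly / 2 * edot (b - a) (b - a) * t * (1 - t) by lra.
apply: H.
move=> s u s0 su u1 /=.
rewrite opprK addrC -edotBl.
apply: (le_trans (edot_CS _ _)).
have Xs : Y (a + s *: (b - a)) by apply: conv_mem => //; apply: (le_trans su).
have Xu : Y (a + u *: (b - a)) by apply: conv_mem => //; apply: (le_trans s0).
have [_ H1] := HL _ _ _ _ Xx Xx Xu Xs.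
have e0 := enorm_ge0 (b - a).
apply: (le_trans (ler_wpM2r e0 H1)).
rewrite subrr enorm0 add0r diffZ enormZ ger0_norm ?subr_ge0 //.
by rewrite -enorm_sq le_eqVlt; apply/orP; left; apply/eqP; field.
Qed.

Lemma Bx {R : realType} {n d : nat} (X : set 'rV[R]_n) (Y : set 'rV[R]_d)
  (f : 'rV[R]_n * 'rV[R]_d -> R) (Lx Ly : R) (x x' : 'rV[R]_n) (a1 a2 : 'rV[R]_d) :
  C1 f -> lipschitz_grad X Y f Lx Ly -> convex_set (X : set (convex_lmodType 'rV[R]_n)) ->
  X x -> X x' -> Y a1 -> Y a2 ->
  f (x', a2) - f (x, a2) - f (x', a1) + f (x, a1) <= Lx * enorm (x' - x) * enorm (a2 - a1).
Proof.
move=> Cf [Lx0 [Ly0 HL]] cX Xx Xx' Ya1 Ya2.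
have := mvt01 (k := fun s => f (x + s *: (x' - x), a2) - f (x + s *: (x' - x), a1))
  (dk := fun s => edot (gradx f (x + s *: (x' - x), a2)) (x' - x) -
                  edot (gradx f (x + s *: (x' - x), a1)) (x' - x))
  (K := Lx * enorm (x' - x) * enorm (a2 - a1))
  (fun s => is_deriveB (line_x _ _ _ Cf s) (line_x _ _ _ Cf s)) _.
rewrite scale0r addr0 scale1r [x + (x' - x)]addrC subrK.
have E : forall p q r s : R, p - q - (r - s) = p - r - q + s by move=> *; ring.
move=> H; rewrite E in H; apply: H.
move=> s s0 s1 /=.
rewrite -edotBl.
apply: (le_trans (edot_CS _ _)).
have Xs : X (x + s *: (x' - x)) by apply: conv_mem.
have [H1 _] := HL _ _ _ _ Xs Xs Ya2 Ya1.
have e0 := enorm_ge0 (x' - x).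
apply: (le_trans (ler_wpM2r e0 H1)).
rewrite subrr enorm0 add0r.
by rewrite le_eqVlt; apply/orP; left; apply/eqP; ring.
Qed.

Lemma By {R : realType} {n d : nat} (X : set 'rV[R]_n) (Y : set 'rV[R]_d)
  (f : 'rV[R]_n * 'rV[R]_d -> R) (Lx Ly : R) (a1 a2 : 'rV[R]_n) (y y' : 'rV[R]_d) :
  C1 f -> lipschitz_grad X Y f Lx Ly -> convex_set (Y : set (convex_lmodType 'rV[R]_d)) ->
  X a1 -> X a2 -> Y y -> Y y' ->
  f (a2, y') - f (a2, y) - f (a1, y') + f (a1, y) <= Ly * enorm (a2 - a1) * enorm (y' - y).
Proof.
move=> Cf [Lx0 [Ly0 HL]] cY Xa1 Xa2 Yy Yy'.
have := mvt01 (k := fun s => f (a2, y + s *: (y' - y)) - f (a1, y + s *: (y' - y)))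
  (dk := fun s => edot (grady f (a2, y + s *: (y' - y))) (y' - y) -
                  edot (grady f (a1, y + s *: (y' - y))) (y' - y))
  (K := Ly * enorm (a2 - a1) * enorm (y' - y))
  (fun s => is_deriveB (line_y _ _ _ Cf s) (line_y _ _ _ Cf s)) _.
rewrite scale0r addr0 scale1r [y + (y' - y)]addrC subrK.
have E : forall p q r s : R, p - q - (r - s) = p - r - q + s by move=> *; ring.
move=> H; rewrite E in H; apply: H.
move=> s s0 s1 /=.
rewrite -edotBl.
apply: (le_trans (edot_CS _ _)).
have Ys : Y (y + s *: (y' - y)) by apply: conv_mem.
have [_ H1] := HL _ _ _ _ Xa2 Xa1 Ys Ys.
have e0 := enorm_ge0 (y' - y).
apply: (le_trans (ler_wpM2r e0 H1)).
rewrite subrr enorm0 addr0.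
by rewrite le_eqVlt; apply/orP; left; apply/eqP; ring.
Qed.

Lemma sup_max {R : realType} (E : set R) x : E x -> (forall y, E y -> y <= x) -> sup E = x.
Proof.
move=> Ex ub; apply/le_anti/andP; split.
  by apply: ge_sup; [exists x | move=> y /ub].
have hu : has_ubound E by exists x => y /ub.
exact: (ub_le_sup hu).
Qed.

Lemma inf_min {R : realType} (E : set R) x : E x -> (forall y, E y -> x <= y) -> inf E = x.
Proof.
move=> Ex lb; apply/le_anti/andP; split.
  have hl : has_lbound E by exists x => y /lb.
  exact: (ge_inf hl).
by apply: lb_le_inf; [exists x | move=> y /lb].
Qed.

Definition sconv {R : realType} {m : nat} (S : set 'rV[R]_m) (G : 'rV[R]_m -> R) (mu : R) :=
  forall a b t, S a -> S b -> 0 <= t -> t <= 1 ->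
    G (a + t *: (b - a)) <= (1 - t) * G a + t * G b - mu / 2 * edot (b - a) (b - a) * t * (1 - t).

Lemma argmin_gap {R : realType} {m : nat} (S : set 'rV[R]_m) (G : 'rV[R]_m -> R) (mu : R) a b :
  0 <= mu -> sconv S G mu -> convex_set (S : set (convex_lmodType 'rV[R]_m)) ->
  is_argmin S G a -> S b -> mu / 2 * edot (b - a) (b - a) <= G b - G a.
Proof.
move=> mu0 sc cS [Sa amin] Sb.
set B := mu / 2 * edot (b - a) (b - a); set A := G b - G a.
have B0 : 0 <= B by rewrite /B mulr_ge0 ?divr_ge0 ?edot_ge0.
have key : forall t, 0 < t -> t < 1 -> B * (1 - t) <= A.
  move=> t t0 t1.
  have h1 := amin _ (conv_mem cS Sa Sb (ltW t0) (ltW t1)).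
  have h2 := sc a b t Sa Sb (ltW t0) (ltW t1).
  rewrite -/B in h2.
  have : t * (B * (1 - t)) <= t * A by rewrite /A; nra.
  by rewrite ler_pM2l.
have A0 : 0 <= A.
  have := key (1/2) ltac:(lra) ltac:(lra); nra.
have [//|AB] := lerP B A.
have Bp : 0 < B by apply: le_lt_trans AB.
have t0 : 0 < (B - A) / (2 * B) by apply: divr_gt0; lra.
have t1 : (B - A) / (2 * B) < 1 by rewrite ltr_pdivrMr; lra.
have := key _ t0 t1.
have -> : B * (1 - (B - A) / (2 * B)) = (A + B) / 2 by field; lra.
lra.
Qed.

Lemma pert {R : realType} {m : nat} (S : set 'rV[R]_m) (G1 G2 : 'rV[R]_m -> R) (mu : R) a1 a2 :
  0 <= mu -> sconv S G1 mu -> sconv S G2 mu -> convex_set (S : set (convex_lmodType 'rV[R]_m)) ->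
  is_argmin S G1 a1 -> is_argmin S G2 a2 ->
  mu * edot (a2 - a1) (a2 - a1) <= (G1 a2 - G2 a2) - (G1 a1 - G2 a1).
Proof.
move=> mu0 s1 s2 cS m1 m2.
have h1 := argmin_gap mu0 s1 cS m1 m2.1.
have h2 := argmin_gap mu0 s2 cS m2 m1.1.
have E : edot (a1 - a2) (a1 - a2) = edot (a2 - a1) (a2 - a1).
  by rewrite -!enorm_sq enormB.
rewrite E in h2; lra.
Qed.

Lemma fin1 {R : realType} (mu K s e sig : R) :
  0 < mu -> 0 <= s -> 0 <= e -> 0 <= sig -> mu * s ^+ 2 <= K * s * e -> K / mu <= sig -> s <= sig * e.
Proof.
move=> mu0 s0 e0 sg0 H Hs.
have [->|sn] := eqVneq s 0; first by rewrite mulr_ge0.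
have sp : 0 < s by rewrite lt_def sn s0.
have H2 : mu * s <= K * e by rewrite -(ler_pM2l sp); nra.
have H3 : s <= K / mu * e by rewrite mulrAC ler_pdivlMr //; lra.
apply: (le_trans H3); exact: ler_wpM2r.
Qed.


Lemma sconvFx {R : realType} {n d : nat} (X : set 'rV[R]_n) (Y : set 'rV[R]_d)
  (f : 'rV[R]_n * 'rV[R]_d -> R) (Lx Ly r1 r2 : R) y z v :
  C1 f -> lipschitz_grad X Y f Lx Ly -> convex_set (X : set (convex_lmodType 'rV[R]_n)) ->
  Y y -> sconv X (fun x => Fobj f r1 r2 x y z v) (r1 - Lx).
Proof.
move=> Cf HL cX Yy a b t Xa Xb t0 t1.
have := WCx Cf HL cX Yy Xa Xb t0 t1.
rewrite /Fobj !enorm_sq edot_conv.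
lra.
Qed.

Lemma sconvFy {R : realType} {n d : nat} (X : set 'rV[R]_n) (Y : set 'rV[R]_d)
  (f : 'rV[R]_n * 'rV[R]_d -> R) (Lx Ly r1 r2 : R) x z v :
  C1 f -> lipschitz_grad X Y f Lx Ly -> convex_set (Y : set (convex_lmodType 'rV[R]_d)) ->
  X x -> sconv Y (fun y => - Fobj f r1 r2 x y z v) (r2 - Ly).
Proof.
move=> Cf HL cY Xx a b t Ya Yb t0 t1.
have := WCy Cf HL cY Xx Ya Yb t0 t1.
rewrite /Fobj !enorm_sq edot_conv.
lra.
Qed.

Lemma hfun_eq {R : realType} {n d : nat} (X : set 'rV[R]_n) (Y : set 'rV[R]_d)
  (f : 'rV[R]_n * 'rV[R]_d -> R) (r1 r2 : R)
  (yxzv : 'rV[R]_n -> 'rV[R]_n -> 'rV[R]_d -> 'rV[R]_d) x z v :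
  (forall x z v, X x -> is_argmax Y (fun y => Fobj f r1 r2 x y z v) (yxzv x z v)) ->
  X x -> hfun Y f r1 r2 x z v = Fobj f r1 r2 x (yxzv x z v) z v.
Proof.
move=> Hy Xx; have [Yy ymax] := Hy x z v Xx.
rewrite /hfun; apply: sup_max; first by exists (yxzv x z v).
by move=> _ [y' Yy' <-]; apply: ymax.
Qed.

Lemma hfun_ge {R : realType} {n d : nat} (X : set 'rV[R]_n) (Y : set 'rV[R]_d)
  (f : 'rV[R]_n * 'rV[R]_d -> R) (r1 r2 : R)
  (yxzv : 'rV[R]_n -> 'rV[R]_n -> 'rV[R]_d -> 'rV[R]_d) x y z v :
  (forall x z v, X x -> is_argmax Y (fun y => Fobj f r1 r2 x y z v) (yxzv x z v)) ->
  X x -> Y y -> Fobj f r1 r2 x y z v <= hfun Y f r1 r2 x z v.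
Proof.
move=> Hy Xx Yy; rewrite (hfun_eq z v Hy Xx).
exact: (Hy x z v Xx).2.
Qed.

Lemma dfun_eq {R : realType} {n d : nat} (X : set 'rV[R]_n) (Y : set 'rV[R]_d)
  (f : 'rV[R]_n * 'rV[R]_d -> R) (r1 r2 : R)
  (xyzv : 'rV[R]_d -> 'rV[R]_n -> 'rV[R]_d -> 'rV[R]_n) y z v :
  (forall y z v, Y y -> is_argmin X (fun x => Fobj f r1 r2 x y z v) (xyzv y z v)) ->
  Y y -> dfun X f r1 r2 y z v = Fobj f r1 r2 (xyzv y z v) y z v.
Proof.
move=> Hx Yy; have [Xx xmin] := Hx y z v Yy.
rewrite /dfun; apply: inf_min; first by exists (xyzv y z v).
by move=> _ [x' Xx' <-]; apply: xmin.
Qed.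

Lemma dfun_le {R : realType} {n d : nat} (X : set 'rV[R]_n) (Y : set 'rV[R]_d)
  (f : 'rV[R]_n * 'rV[R]_d -> R) (r1 r2 : R)
  (xyzv : 'rV[R]_d -> 'rV[R]_n -> 'rV[R]_d -> 'rV[R]_n) x y z v :
  (forall y z v, Y y -> is_argmin X (fun x => Fobj f r1 r2 x y z v) (xyzv y z v)) ->
  X x -> Y y -> dfun X f r1 r2 y z v <= Fobj f r1 r2 x y z v.
Proof.
move=> Hx Xx Yy; rewrite (dfun_eq z v Hx Yy).
exact: (Hx y z v Yy).2.
Qed.

Lemma sconvH {R : realType} {n d : nat} (X : set 'rV[R]_n) (Y : set 'rV[R]_d)
  (f : 'rV[R]_n * 'rV[R]_d -> R) (Lx Ly r1 r2 : R)
  (yxzv : 'rV[R]_n -> 'rV[R]_n -> 'rV[R]_d -> 'rV[R]_d) z v :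
  C1 f -> lipschitz_grad X Y f Lx Ly -> convex_set (X : set (convex_lmodType 'rV[R]_n)) ->
  (forall x z v, X x -> is_argmax Y (fun y => Fobj f r1 r2 x y z v) (yxzv x z v)) ->
  sconv X (fun x => hfun Y f r1 r2 x z v) (r1 - Lx).
Proof.
move=> Cf HL cX Hy a b t Xa Xb t0 t1 /=.
have Xt := conv_mem cX Xa Xb t0 t1.
set xt := a + t *: (b - a).
set ys := yxzv xt z v.
have Yys : Y ys := (Hy xt z v Xt).1.
rewrite (hfun_eq z v Hy Xt) -/ys.
have := sconvFx r1 r2 z v Cf HL cX Yys Xa Xb t0 t1.
have ha := hfun_ge z v Hy Xa Yys.
have hb := hfun_ge z v Hy Xb Yys.
have ha' := ler_wpM2l (x := 1 - t) ltac:(lra) ha.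
have hb' := ler_wpM2l t0 hb.
rewrite -/xt /=; lra.
Qed.

Lemma sconvD {R : realType} {n d : nat} (X : set 'rV[R]_n) (Y : set 'rV[R]_d)
  (f : 'rV[R]_n * 'rV[R]_d -> R) (Lx Ly r1 r2 : R)
  (xyzv : 'rV[R]_d -> 'rV[R]_n -> 'rV[R]_d -> 'rV[R]_n) z v :
  C1 f -> lipschitz_grad X Y f Lx Ly -> convex_set (Y : set (convex_lmodType 'rV[R]_d)) ->
  (forall y z v, Y y -> is_argmin X (fun x => Fobj f r1 r2 x y z v) (xyzv y z v)) ->
  sconv Y (fun y => - dfun X f r1 r2 y z v) (r2 - Ly).
Proof.
move=> Cf HL cY Hx a b t Ya Yb t0 t1 /=.
have Yt := conv_mem cY Ya Yb t0 t1.
set yt := a + t *: (b - a).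
set xs := xyzv yt z v.
have Xxs : X xs := (Hx yt z v Yt).1.
rewrite (dfun_eq z v Hx Yt) -/xs.
have := sconvFy r1 r2 z v Cf HL cY Xxs Ya Yb t0 t1.
have ha := dfun_le z v Hx Xxs Ya.
have hb := dfun_le z v Hx Xxs Yb.
have ha' := ler_wpM2l (x := 1 - t) ltac:(lra) ha.
have hb' := ler_wpM2l t0 hb.
rewrite -/yt /=; lra.
Qed.

Lemma sig_le {R : realType} (K mu c : R) : 0 < mu -> K <= c -> K / mu <= c / mu.
Proof. by move=> mu0 Kc; rewrite ler_pM2r // invr_gt0. Qed.

Lemma part1 {R : realType} {n d : nat} (X : set 'rV[R]_n) (Y : set 'rV[R]_d)
  (f : 'rV[R]_n * 'rV[R]_d -> R) (Lx Ly r1 r2 : R)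
  (xyzv : 'rV[R]_d -> 'rV[R]_n -> 'rV[R]_d -> 'rV[R]_n) y y' z v :
  C1 f -> lipschitz_grad X Y f Lx Ly ->
  convex_set (X : set (convex_lmodType 'rV[R]_n)) -> convex_set (Y : set (convex_lmodType 'rV[R]_d)) ->
  Lx < r1 ->
  (forall y z v, Y y -> is_argmin X (fun x => Fobj f r1 r2 x y z v) (xyzv y z v)) ->
  Y y -> Y y' ->
  enorm (xyzv y' z v - xyzv y z v) <= (Ly + r1 - Lx) / (r1 - Lx) * enorm (y' - y).
Proof.
move=> Cf HL cX cY Lr Hx Yy Yy'.
have [Lx0 [Ly0 _]] := HL.
have mu0 : 0 < r1 - Lx by lra.
have m1 := Hx y' z v Yy'; have m2 := Hx y z v Yy.
have P := pert (ltW mu0) (sconvFx r1 r2 z v Cf HL cX Yy') (sconvFx r1 r2 z v Cf HL cX Yy) cX m1 m2.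
have B := By Cf HL cY m1.1 m2.1 Yy Yy'.
move: P B; rewrite /Fobj => P B.
rewrite enormB; apply: (fin1 (mu := r1 - Lx) (K := Ly)) => //.
- exact: enorm_ge0.
- exact: enorm_ge0.
- by apply: divr_ge0; lra.
- rewrite enorm_sq; lra.
- by apply: sig_le => //; lra.
Qed.

Lemma argmax_neg {R : realType} {m : nat} (S : set 'rV[R]_m) (g : 'rV[R]_m -> R) a :
  is_argmax S g a -> is_argmin S (fun y => - g y) a.
Proof. by move=> [Sa H]; split => // b Sb; rewrite lerN2; apply: H. Qed.

Lemma part2 {R : realType} {n d : nat} (X : set 'rV[R]_n) (Y : set 'rV[R]_d)
  (f : 'rV[R]_n * 'rV[R]_d -> R) (Lx Ly r1 r2 : R)
  (xyzv : 'rV[R]_d -> 'rV[R]_n -> 'rV[R]_d -> 'rV[R]_n) y z z' v :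
  C1 f -> lipschitz_grad X Y f Lx Ly ->
  convex_set (X : set (convex_lmodType 'rV[R]_n)) ->
  Lx < r1 ->
  (forall y z v, Y y -> is_argmin X (fun x => Fobj f r1 r2 x y z v) (xyzv y z v)) ->
  Y y ->
  enorm (xyzv y z' v - xyzv y z v) <= r1 / (r1 - Lx) * enorm (z - z').
Proof.
move=> Cf HL cX Lr Hx Yy.
have [Lx0 [Ly0 _]] := HL.
have mu0 : 0 < r1 - Lx by lra.
have m1 := Hx y z v Yy; have m2 := Hx y z' v Yy.
have P := pert (ltW mu0) (sconvFx r1 r2 z v Cf HL cX Yy) (sconvFx r1 r2 z' v Cf HL cX Yy) cX m1 m2.
set a1 := xyzv y z v in P *; set a2 := xyzv y z' v in P *.
have D4 := congr1 (fun w => r1 / 2 * w) (edot_diff4 a1 a2 z z').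
have CS := edot_CS (a2 - a1) (z' - z).
have CS' := ler_wpM2l (ltW (lt_trans Lx0 Lr)) CS.
move: P D4 CS'; rewrite /Fobj !enorm_sq /= => P D4 CS'.
apply: (fin1 (mu := r1 - Lx) (K := r1)) => //.
- exact: enorm_ge0.
- exact: enorm_ge0.
- by apply: divr_ge0; lra.
- rewrite enorm_sq (enormB z); lra.
Qed.

Lemma part3 {R : realType} {n d : nat} (X : set 'rV[R]_n) (Y : set 'rV[R]_d)
  (f : 'rV[R]_n * 'rV[R]_d -> R) (Lx Ly r1 r2 : R)
  (yxzv : 'rV[R]_n -> 'rV[R]_n -> 'rV[R]_d -> 'rV[R]_d)
  (xzv : 'rV[R]_n -> 'rV[R]_d -> 'rV[R]_n) z z' v :
  C1 f -> lipschitz_grad X Y f Lx Ly ->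
  convex_set (X : set (convex_lmodType 'rV[R]_n)) ->
  Lx < r1 ->
  (forall x z v, X x -> is_argmax Y (fun y => Fobj f r1 r2 x y z v) (yxzv x z v)) ->
  (forall z v, is_argmin X (fun x => hfun Y f r1 r2 x z v) (xzv z v)) ->
  enorm (xzv z' v - xzv z v) <= r1 / (r1 - Lx) * enorm (z - z').
Proof.
move=> Cf HL cX Lr Hy Hh.
have [Lx0 [Ly0 _]] := HL.
have mu0 : 0 < r1 - Lx by lra.
have m1 := Hh z v; have m2 := Hh z' v.
have P := pert (ltW mu0) (sconvH z v Cf HL cX Hy) (sconvH z' v Cf HL cX Hy) cX m1 m2.
set a1 := xzv z v in P *; set a2 := xzv z' v in P *.
have Xa1 : X a1 := m1.1; have Xa2 : X a2 := m2.1.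
rewrite /= (hfun_eq z v Hy Xa2) (hfun_eq z' v Hy Xa1) in P.
have h1 := hfun_ge z' v Hy Xa2 (Hy a2 z v Xa2).1.
have h2 := hfun_ge z v Hy Xa1 (Hy a1 z' v Xa1).1.
have D4 := congr1 (fun w => r1 / 2 * w) (edot_diff4 a1 a2 z z').
have CS := edot_CS (a2 - a1) (z' - z).
have CS' := ler_wpM2l (ltW (lt_trans Lx0 Lr)) CS.
move: P h1 h2 D4 CS'; rewrite /Fobj !enorm_sq /= => P h1 h2 D4 CS'.
apply: (fin1 (mu := r1 - Lx) (K := r1)) => //.
- exact: enorm_ge0.
- exact: enorm_ge0.
- by apply: divr_ge0; lra.
- rewrite enorm_sq (enormB z); lra.
Qed.

Lemma part5 {R : realType} {n d : nat} (X : set 'rV[R]_n) (Y : set 'rV[R]_d)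
  (f : 'rV[R]_n * 'rV[R]_d -> R) (Lx Ly r1 r2 : R)
  (yxzv : 'rV[R]_n -> 'rV[R]_n -> 'rV[R]_d -> 'rV[R]_d) x x' z v :
  C1 f -> lipschitz_grad X Y f Lx Ly ->
  convex_set (X : set (convex_lmodType 'rV[R]_n)) -> convex_set (Y : set (convex_lmodType 'rV[R]_d)) ->
  Ly < r2 ->
  (forall x z v, X x -> is_argmax Y (fun y => Fobj f r1 r2 x y z v) (yxzv x z v)) ->
  X x -> X x' ->
  enorm (yxzv x z v - yxzv x' z v) <= (Lx + r2 - Ly) / (r2 - Ly) * enorm (x - x').
Proof.
move=> Cf HL cX cY Lr Hy Xx Xx'.
have [Lx0 [Ly0 _]] := HL.
have mu0 : 0 < r2 - Ly by lra.
have m1 := argmax_neg (Hy x z v Xx); have m2 := argmax_neg (Hy x' z v Xx').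
have P := pert (ltW mu0) (sconvFy r1 r2 z v Cf HL cY Xx) (sconvFy r1 r2 z v Cf HL cY Xx') cY m1 m2.
set a1 := yxzv x z v in P m1 *; set a2 := yxzv x' z v in P m2 *.
have B := Bx Cf HL cX Xx Xx' m1.1 m2.1.
move: P B; rewrite /Fobj /= => P B.
rewrite enormB (enormB x); apply: (fin1 (mu := r2 - Ly) (K := Lx)) => //.
- exact: enorm_ge0.
- exact: enorm_ge0.
- by apply: divr_ge0; lra.
- rewrite enorm_sq; lra.
- by apply: sig_le => //; lra.
Qed.

Lemma part6 {R : realType} {n d : nat} (X : set 'rV[R]_n) (Y : set 'rV[R]_d)
  (f : 'rV[R]_n * 'rV[R]_d -> R) (Lx Ly r1 r2 : R)
  (yxzv : 'rV[R]_n -> 'rV[R]_n -> 'rV[R]_d -> 'rV[R]_d) x z v v' :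
  C1 f -> lipschitz_grad X Y f Lx Ly ->
  convex_set (Y : set (convex_lmodType 'rV[R]_d)) ->
  Ly < r2 ->
  (forall x z v, X x -> is_argmax Y (fun y => Fobj f r1 r2 x y z v) (yxzv x z v)) ->
  X x ->
  enorm (yxzv x z v - yxzv x z v') <= r2 / (r2 - Ly) * enorm (v - v').
Proof.
move=> Cf HL cY Lr Hy Xx.
have [Lx0 [Ly0 _]] := HL.
have mu0 : 0 < r2 - Ly by lra.
have m1 := argmax_neg (Hy x z v Xx); have m2 := argmax_neg (Hy x z v' Xx).
have P := pert (ltW mu0) (sconvFy r1 r2 z v Cf HL cY Xx) (sconvFy r1 r2 z v' Cf HL cY Xx) cY m1 m2.
set a1 := yxzv x z v in P m1 *; set a2 := yxzv x z v' in P m2 *.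
have D4 := congr1 (fun w => r2 / 2 * w) (edot_diff4 a1 a2 v v').
have CS := edot_CS (a2 - a1) (v' - v).
have CS' := ler_wpM2l (ltW (lt_trans Ly0 Lr)) CS.
move: P D4 CS'; rewrite /Fobj !enorm_sq /= => P D4 CS'.
rewrite enormB; apply: (fin1 (mu := r2 - Ly) (K := r2)) => //.
- exact: enorm_ge0.
- exact: enorm_ge0.
- by apply: divr_ge0; lra.
- rewrite enorm_sq (enormB v); lra.
Qed.

Lemma part7 {R : realType} {n d : nat} (X : set 'rV[R]_n) (Y : set 'rV[R]_d)
  (f : 'rV[R]_n * 'rV[R]_d -> R) (Lx Ly r1 r2 : R)
  (xyzv : 'rV[R]_d -> 'rV[R]_n -> 'rV[R]_d -> 'rV[R]_n)
  (yzv : 'rV[R]_n -> 'rV[R]_d -> 'rV[R]_d) z v v' :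
  C1 f -> lipschitz_grad X Y f Lx Ly ->
  convex_set (Y : set (convex_lmodType 'rV[R]_d)) ->
  Ly < r2 ->
  (forall y z v, Y y -> is_argmin X (fun x => Fobj f r1 r2 x y z v) (xyzv y z v)) ->
  (forall z v, is_argmax Y (fun y => dfun X f r1 r2 y z v) (yzv z v)) ->
  enorm (yzv z v - yzv z v') <= r2 / (r2 - Ly) * enorm (v - v').
Proof.
move=> Cf HL cY Lr Hx Hd.
have [Lx0 [Ly0 _]] := HL.
have mu0 : 0 < r2 - Ly by lra.
have m1 := argmax_neg (Hd z v); have m2 := argmax_neg (Hd z v').
have P := pert (ltW mu0) (sconvD z v Cf HL cY Hx) (sconvD z v' Cf HL cY Hx) cY m1 m2.
set a1 := yzv z v in P m1 *; set a2 := yzv z v' in P m2 *.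
have Ya1 : Y a1 := m1.1; have Ya2 : Y a2 := m2.1.
rewrite /= (dfun_eq z v Hx Ya2) (dfun_eq z v' Hx Ya1) in P.
have h1 := dfun_le z v' Hx (Hx a2 z v Ya2).1 Ya2.
have h2 := dfun_le z v Hx (Hx a1 z v' Ya1).1 Ya1.
have D4 := congr1 (fun w => r2 / 2 * w) (edot_diff4 a1 a2 v v').
have CS := edot_CS (a2 - a1) (v' - v).
have CS' := ler_wpM2l (ltW (lt_trans Ly0 Lr)) CS.
move: P h1 h2 D4 CS'; rewrite /Fobj !enorm_sq /= => P h1 h2 D4 CS'.
rewrite enormB; apply: (fin1 (mu := r2 - Ly) (K := r2)) => //.
- exact: enorm_ge0.
- exact: enorm_ge0.
- by apply: divr_ge0; lra.
- rewrite enorm_sq (enormB v); lra.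
Qed.

Lemma fin2 {R : realType} (mu s1 s2 r1 s e : R) :
  0 < mu -> 0 < s1 -> 0 < s2 -> 0 < r1 -> 0 <= s -> 0 <= e ->
  mu * s ^+ 2 <= r1 * (s1 * s * e + s2 * e ^+ 2) ->
  s <= (r1 * s1 / mu + s2 / s1) * e.
Proof.
move=> mu0 s10 s20 r10 s0 e0 H.
set A := r1 * s1 / mu; set q := s2 / s1.
have A0 : 0 < A by rewrite /A divr_gt0 ?mulr_gt0.
have q0 : 0 < q by rewrite /q divr_gt0.
have EA : r1 * s1 = mu * A by rewrite /A; field; rewrite gt_eqF.
have Eq : r1 * s2 = mu * (A * q) by rewrite /A /q; field; rewrite !gt_eqF.
have E2 : r1 * (s1 * s * e + s2 * e ^+ 2) = (r1 * s1) * s * e + (r1 * s2) * e ^+ 2 by ring.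
rewrite E2 EA Eq in H.
have H' : s ^+ 2 <= A * s * e + A * q * e ^+ 2.
  rewrite -(ler_pM2l mu0); apply: (le_trans H); rewrite le_eqVlt; apply/orP; left; apply/eqP; ring.
rewrite -/A -/q.
have [//|lt] := lerP s ((A + q) * e).
exfalso.
have h1 : q * e < s - A * e by lra.
have h2 : 0 <= q * e by rewrite mulr_ge0 // ltW.
have sp : 0 < s by apply: le_lt_trans lt; rewrite mulr_ge0 // addr_ge0 // ltW.
have h3 : s * (q * e) <= s * (s - A * e) by rewrite ler_pM2l //; exact: ltW.
nra.
Qed.

Lemma part4 {R : realType} {n d : nat} (X : set 'rV[R]_n) (Y : set 'rV[R]_d)
  (f : 'rV[R]_n * 'rV[R]_d -> R) (Lx Ly r1 r2 : R)
  (xyzv : 'rV[R]_d -> 'rV[R]_n -> 'rV[R]_d -> 'rV[R]_n)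
  (yzv : 'rV[R]_n -> 'rV[R]_d -> 'rV[R]_d) z z' v :
  C1 f -> lipschitz_grad X Y f Lx Ly ->
  convex_set (X : set (convex_lmodType 'rV[R]_n)) -> convex_set (Y : set (convex_lmodType 'rV[R]_d)) ->
  Lx < r1 -> Ly < r2 ->
  (forall y z v, Y y -> is_argmin X (fun x => Fobj f r1 r2 x y z v) (xyzv y z v)) ->
  (forall z v, is_argmax Y (fun y => dfun X f r1 r2 y z v) (yzv z v)) ->
  enorm (yzv z v - yzv z' v) <=
    (r1 * ((Ly + r1 - Lx) / (r1 - Lx)) / (r2 - Ly) + (r1 / (r1 - Lx)) / ((Ly + r1 - Lx) / (r1 - Lx)))
    * enorm (z - z').
Proof.
move=> Cf HL cX cY Lr1 Lr2 Hx Hd.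
have [Lx0 [Ly0 _]] := HL.
have mu0 : 0 < r2 - Ly by lra.
have m1 := argmax_neg (Hd z v); have m2 := argmax_neg (Hd z' v).
have P := pert (ltW mu0) (sconvD z v Cf HL cY Hx) (sconvD z' v Cf HL cY Hx) cY m1 m2.
set a1 := yzv z v in P m1 *; set a2 := yzv z' v in P m2 *.
have Ya1 : Y a1 := m1.1; have Ya2 : Y a2 := m2.1.
set p := xyzv a2 z v; set q := xyzv a1 z' v; set c := xyzv a1 z v.
rewrite /= (dfun_eq z v Hx Ya2) (dfun_eq z' v Hx Ya1) -/p -/q in P.
have h1 := dfun_le z' v Hx (Hx a2 z v Ya2).1 Ya2.
have h2 := dfun_le z v Hx (Hx a1 z' v Ya1).1 Ya1.
rewrite -/p in h1; rewrite -/q in h2.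
have D4 := congr1 (fun w => r1 / 2 * w) (edot_diff4 q p z' z).
have Esplit : edot (p - q) (z - z') = edot (p - c) (z - z') + edot (q - c) (z' - z).
  by rewrite !(edotBl, edotBr); ring.
have CS1 := edot_CS (p - c) (z - z').
have CS2 := edot_CS (q - c) (z' - z).
have B1 := part1 z v Cf HL cX cY Lr1 Hx Ya1 Ya2.
have B2 := part2 z z' v Cf HL cX Lr1 Hx Ya1.
rewrite -/p -/c in B1; rewrite -/q -/c in B2.
rewrite (enormB z') in CS2.
set s := enorm (a2 - a1) in B1; set e := enorm (z - z') in B2 CS1 CS2.
set s1 := (Ly + r1 - Lx) / (r1 - Lx) in B1 *; set s2 := r1 / (r1 - Lx) in B2 *.
have e0 : 0 <= e := enorm_ge0 _.
have s0 : 0 <= s := enorm_ge0 _.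
have r10 : 0 < r1 by lra.
have C1' : edot (p - c) (z - z') <= s1 * s * e.
  apply: (le_trans CS1); exact: ler_wpM2r.
have C2' : edot (q - c) (z' - z) <= s2 * e * e.
  apply: (le_trans CS2); apply: ler_wpM2r => //.
have T : edot (p - q) (z - z') <= s1 * s * e + s2 * e ^+ 2 by rewrite Esplit expr2; lra.
have T' := ler_wpM2l (ltW r10) T.
move: P h1 h2 D4; rewrite /Fobj !enorm_sq /= => P h1 h2 D4.
rewrite enormB; apply: fin2 => //.
- by rewrite /s1; apply: divr_gt0; lra.
- by rewrite /s2; apply: divr_gt0; lra.
- have sN : s ^+ 2 = edot (a2 - a1) (a2 - a1) by rewrite /s enorm_sq.
  rewrite -/s -/e sN; lra.
Qed.

Unset Implicit Arguments.

Theorem lemma2 (R : realType) (n d : nat)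
  (X : set 'rV[R]_n) (Y : set 'rV[R]_d)
  (f : 'rV[R]_n * 'rV[R]_d -> R) (Lx Ly r1 r2 : R)
  (xyzv : 'rV[R]_d -> 'rV[R]_n -> 'rV[R]_d -> 'rV[R]_n)
  (yxzv : 'rV[R]_n -> 'rV[R]_n -> 'rV[R]_d -> 'rV[R]_d)
  (xzv : 'rV[R]_n -> 'rV[R]_d -> 'rV[R]_n)
  (yzv : 'rV[R]_n -> 'rV[R]_d -> 'rV[R]_d) :
  X !=set0 -> convex_set (X : set (convex_lmodType 'rV[R]_n)) -> compact X ->
  Y !=set0 -> convex_set (Y : set (convex_lmodType 'rV[R]_d)) -> compact Y ->
  C1 f ->
  lipschitz_grad X Y f Lx Ly ->
  Lx < r1 ->
  (Ly / (r1 - Lx) + 2) * Ly < r2 ->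
  (* x(y,z,v) = argmin_{x in X} F(x,y,z,v) *)
  (forall y z v, Y y -> is_argmin X (fun x => Fobj f r1 r2 x y z v) (xyzv y z v)) ->
  (* y(x,z,v) = argmax_{y in Y} F(x,y,z,v) *)
  (forall x z v, X x -> is_argmax Y (fun y => Fobj f r1 r2 x y z v) (yxzv x z v)) ->
  (* x(z,v) = argmin_{x in X} h(x,z,v) *)
  (forall z v, is_argmin X (fun x => hfun Y f r1 r2 x z v) (xzv z v)) ->
  (* y(z,v) = argmax_{y in Y} d(y,z,v) *)
  (forall z v, is_argmax Y (fun y => dfun X f r1 r2 y z v) (yzv z v)) ->
  let sigma1 := (Ly + r1 - Lx) / (r1 - Lx) in
  let sigma2 := r1 / (r1 - Lx) in
  let sigma3 := r1 * sigma1 / (r2 - Ly) + sigma2 / sigma1 in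
  let sigma4 := (Lx + r2 - Ly) / (r2 - Ly) in
  let sigma5 := r2 / (r2 - Ly) in
  forall (x x' : 'rV[R]_n) (y y' : 'rV[R]_d) (z z' : 'rV[R]_n) (v v' : 'rV[R]_d),
    X x -> X x' -> Y y -> Y y' ->
    (enorm (xyzv y' z v - xyzv y z v) <= sigma1 * enorm (y' - y)) /\
    (enorm (xyzv y z' v - xyzv y z v) <= sigma2 * enorm (z - z')) /\
    (enorm (xzv z' v - xzv z v) <= sigma2 * enorm (z - z')) /\
    (enorm (yzv z v - yzv z' v) <= sigma3 * enorm (z - z')) /\
    (enorm (yxzv x z v - yxzv x' z v) <= sigma4 * enorm (x - x')) /\
    (enorm (yxzv x z v - yxzv x z v') <= sigma5 * enorm (v - v')) /\
    (enorm (yzv z v - yzv z v') <= sigma5 * enorm (v - v')).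
Proof.
move=> nX cX kX nY cY kY Cf HL Lr1 Lr2 Hx Hy Hh Hd sigma1 sigma2 sigma3 sigma4 sigma5
  x x' y y' z z' v v' Xx Xx' Yy Yy'.
have [Lx0 [Ly0 _]] := HL.
have Lr2' : Ly < r2.
  have : 0 <= Ly / (r1 - Lx) * Ly by rewrite mulr_ge0 // ?divr_ge0 // ?ltW // subr_gt0.
  lra.
split; first exact: (part1 z v Cf HL cX cY Lr1 Hx Yy Yy').
split; first exact: (part2 z z' v Cf HL cX Lr1 Hx Yy).
split; first exact: (part3 z z' v Cf HL cX Lr1 Hy Hh).
split; first exact: (part4 z z' v Cf HL cX cY Lr1 Lr2' Hx Hd).
split; first exact: (part5 z v Cf HL cX cY Lr2' Hy Xx Xx').
split; first exact: (part6 z v v' Cf HL cY Lr2' Hy Xx).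
exact: (part7 z v v' Cf HL cY Lr2' Hx Hd).
Qed.
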